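(* Let $m\le p<n$. Let $Q$ be an $n\times p$ matrix with $Q^*BQ=I_p$ of the form $$Q=[\,(X_m+X_m'G)L^{-1}\;\;V\,]\,U,$$ where: - $G$ is $(n-m)\times m$ with $\|G\|=\epsilon\le1/2$; - $V$ is $n\times(p-m)$; - $U$ is $p\times p$ unitary; - $L^{-1}=[(X_m+X_m'G)^*B(X_m+X_m'G)]^{-1/2}$. Then: (1) $\|L^{-1}-I_m\|\le\epsilon^2$, and $V=X_mS+X_m'HR$ for some $m\times(p-m)$ matrix $S$ with $\|S\|\le\epsilon$, some $(n-m)\times(p-m)$ matrix $H$ with $H^*H=I_{p-m}$, and some $(p-m)\times(p-m)$ matrix $R$ with $\|R-I_{p-m}\|\le\epsilon^2$. (2) $X^*BQ=\left(\begin{bmatrix}I_m&0\\0&H\end{bmatrix}+\Theta\right)U$, where $\Theta=\begin{bmatrix}\Theta_{11}&\Theta_{12}\\ \Theta_{21}&\Theta_{22}\end{bmatrix}$ with $\Theta_{11}$ of size $m\times m$ satisfies $\|\Theta_{11}\|,\|\Theta_{22}\|\le\epsilon^2$ and $\|\Theta_{12}\|,\|\Theta_{21}\|\le(1+\epsilon^2)\epsilon$. (3) For every real diagonal $n\times n$ matrix $D=\mathrm{diag}(D_m,D_m')$, with $D_m$ of size $m\times m$, $$(Q^*BX)D(X^*BQ)=U^*\left(\begin{bmatrix}D_m&0\\0&H^*D_m'H\end{bmatrix}+\Delta\right)U,\qquad \Delta=\begin{bmatrix}\Delta_{11}&\Delta_{12}\\ \Delta_{12}^*&\Delta_{22}\end{bmatrix},$$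 where $\Delta_{11}$ is $m\times m$, $\|\Delta_{11}\|,\|\Delta_{22}\|\le4\|D\|\epsilon^2$ and $\|\Delta_{12}\|\le4\|D\|\epsilon$.
   Context: Setup: - $A,B$ are Hermitian $n\times n$ matrices, $B$ positive definite, $B=C^*C$ with $C$ invertible. - $X=[x_1,\dots,x_n]$ satisfies $X^*BX=I$ (so $CX$ is unitary) and $AX=BX\Lambda$, with $\Lambda$ real diagonal. - $X_m=[x_1,\dots,x_m]$ and $X_m'=[x_{m+1},\dots,x_n]$. - $\|\cdot\|$ is the spectral norm; $(\cdot)^{-1/2}$ of a Hermitian positive definite matrix is the principal inverse square root. *)

(* Defs.v *)
(* Complex matrices are modelled over an arbitrary
   numClosedFieldType C (e.g. the complex numbers), with conjugation Num.conj. *)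
From HB Require Import structures.
From mathcomp Require Import all_boot all_order all_algebra.
Set Implicit Arguments. Unset Strict Implicit. Unset Printing Implicit Defensive.
Import Order.TTheory GRing.Theory Num.Theory.
Local Open Scope ring_scope.

Section Defs.
Variable C : numClosedFieldType.

Definition ctr (a b : nat) (A : 'M[C]_(a, b)) : 'M[C]_(b, a) :=
  (map_mx Num.conj A)^T.

Definition vnorm2 (a : nat) (x : 'cV[C]_a) : C := \sum_i `|x i 0| ^+ 2.

(* spectral-norm bound:  ||A|| <= c  (the spectral norm is the operator norm
   induced by the Euclidean norm, so this is its defining property) *)
Definition norm_le (a b : nat) (A : 'M[C]_(a, b)) (c : C) : Prop :=
  0 <= c /\ forall x : 'cV[C]_b, vnorm2 (A *m x) <= c ^+ 2 * vnorm2 x.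

Definition is_specnorm (a b : nat) (A : 'M[C]_(a, b)) (e : C) : Prop :=
  norm_le A e /\ forall c, norm_le A c -> e <= c.

Definition herm_mx (a : nat) (M : 'M[C]_a) : Prop := ctr M = M.

Definition posdef_mx (a : nat) (M : 'M[C]_a) : Prop :=
  herm_mx M /\ forall x : 'cV[C]_a, x != 0 -> 0 < (ctr x *m M *m x) 0 0.

Definition unitary_mx (a : nat) (U : 'M[C]_a) : Prop := ctr U *m U = 1%:M.

Definition is_pinvsqrt (a : nat) (M S : 'M[C]_a) : Prop :=
  posdef_mx S /\ S *m S *m M = 1%:M.

Definition real_diag (a : nat) (D : 'M[C]_a) : Prop :=
  exists d : 'rV[C]_a, D = diag_mx d /\ forall i, d 0 i \is Num.real.

End Defs.

(* Main.v *)
Require Import Defs.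
From HB Require Import structures.
From mathcomp Require Import all_boot all_order all_algebra ring.
Import Order.TTheory GRing.Theory Num.Theory.
Local Open Scope ring_scope.
Set Implicit Arguments. Unset Strict Implicit.
Section Infra.
Variable C : numClosedFieldType.
Implicit Types (a b c : C).

Lemma vnorm2E n (x : 'cV[C]_n) : vnorm2 x = (ctr x *m x) 0 0.
Proof. by rewrite /vnorm2 mxE; apply: eq_bigr => i _; rewrite !mxE normCK mulrC. Qed.

Lemma vnorm2_dot n (x : 'cV[C]_n) : vnorm2 x = dotmx x^T x^T.
Proof. rewrite vnorm2E dotmxE !mxE; apply: eq_bigr => i _; rewrite !mxE mulrC; reflexivity. Qed.

Lemma ip_dot n (x y : 'cV[C]_n) : (ctr x *m y) 0 0 = dotmx y^T x^T.
Proof. rewrite dotmxE !mxE; apply: eq_bigr => i _; rewrite !mxE mulrC; reflexivity. Qed.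

Lemma vnorm2_ge0 n (x : 'cV[C]_n) : 0 <= vnorm2 x.
Proof. by apply: sumr_ge0 => i _; rewrite exprn_ge0. Qed.

Lemma vnorm2_nneg n (x : 'cV[C]_n) : vnorm2 x \is Num.nneg.
Proof. by rewrite nnegrE vnorm2_ge0. Qed.

Lemma vnorm2_triangle n (x y : 'cV[C]_n) :
  sqrtC (vnorm2 (x + y)) <= sqrtC (vnorm2 x) + sqrtC (vnorm2 y).
Proof. by rewrite !vnorm2_dot linearD /= (triangle_lerif (@dotmx C n) _ _).1. Qed.

Lemma CS n (x y : 'cV[C]_n) : `|(ctr x *m y) 0 0| ^+ 2 <= vnorm2 x * vnorm2 y.
Proof. by rewrite ip_dot !vnorm2_dot mulrC (CauchySchwarz (@dotmx C n) _ _).1. Qed.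

Definition vn n (x : 'cV[C]_n) := sqrtC (vnorm2 x).

Lemma vn_ge0 n (x : 'cV[C]_n) : 0 <= vn x.
Proof. by rewrite sqrtC_ge0 vnorm2_ge0. Qed.

Lemma norm_leP p q (A : 'M[C]_(p, q)) c :
  norm_le A c <-> 0 <= c /\ forall x, vn (A *m x) <= c * vn x.
Proof.
split=> -[c0 H]; split=> // x.
  rewrite /vn -[c](sqrCK c0) -sqrtCM ?nnegrE ?exprn_ge0 ?vnorm2_ge0 //.
  by rewrite ler_sqrtC ?nnegrE ?mulr_ge0 ?exprn_ge0 ?vnorm2_ge0.
have := H x; rewrite /vn -[c](sqrCK c0) -sqrtCM ?nnegrE ?exprn_ge0 ?vnorm2_ge0 //.
by rewrite ler_sqrtC ?nnegrE ?mulr_ge0 ?exprn_ge0 ?vnorm2_ge0 // sqrCK.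
Qed.

Lemma nl_ge0 p q (A : 'M[C]_(p, q)) c : norm_le A c -> 0 <= c.
Proof. by case. Qed.

Lemma nl_mul p q s (A : 'M[C]_(p, q)) (B : 'M[C]_(q, s)) a b :
  norm_le A a -> norm_le B b -> norm_le (A *m B) (a * b).
Proof.
move=> /norm_leP [a0 HA] /norm_leP [b0 HB]; apply/norm_leP; split; first exact: mulr_ge0.
move=> x; rewrite -mulmxA (le_trans (HA _)) // -mulrA ler_wpM2l ?HB //.
Qed.

Lemma nl_add p q (A B : 'M[C]_(p, q)) a b :
  norm_le A a -> norm_le B b -> norm_le (A + B) (a + b).
Proof.
move=> /norm_leP [a0 HA] /norm_leP [b0 HB]; apply/norm_leP; split; first exact: addr_ge0.
move=> x; rewrite mulmxDl (le_trans (vnorm2_triangle _ _)) // mulrDl lerD ?HA ?HB //.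
Qed.

Lemma nl_le p q (A : 'M[C]_(p, q)) a b : norm_le A a -> a <= b -> norm_le A b.
Proof.
move=> /norm_leP [a0 HA] ab; apply/norm_leP; split; first exact: le_trans ab.
by move=> x; rewrite (le_trans (HA x)) // ler_wpM2r ?vn_ge0.
Qed.

Lemma vnorm2N n (x : 'cV[C]_n) : vnorm2 (- x) = vnorm2 x.
Proof. by rewrite /vnorm2; apply: eq_bigr => i _; rewrite mxE normrN. Qed.

Lemma nl_opp p q (A : 'M[C]_(p, q)) a : norm_le A a -> norm_le (- A) a.
Proof. by case=> a0 H; split=> // x; rewrite mulNmx vnorm2N. Qed.

Lemma nl_0 p q : norm_le (0 : 'M[C]_(p, q)) 0.
Proof.
split=> // x; rewrite mul0mx expr0n /= mul0r /vnorm2 big1 // => i _.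
by rewrite mxE normr0 expr0n.
Qed.

Lemma ctr_mul p q s (A : 'M[C]_(p, q)) (B : 'M[C]_(q, s)) : ctr (A *m B) = ctr B *m ctr A.
Proof. by rewrite /ctr map_mxM trmx_mul. Qed.
Lemma ctrD p q (A B : 'M[C]_(p, q)) : ctr (A + B) = ctr A + ctr B.
Proof. by rewrite /ctr map_mxD linearD. Qed.
Lemma ctrN p q (A : 'M[C]_(p, q)) : ctr (- A) = - ctr A.
Proof. by rewrite /ctr map_mxN linearN. Qed.
Lemma ctrB p q (A B : 'M[C]_(p, q)) : ctr (A - B) = ctr A - ctr B.
Proof. by rewrite ctrD ctrN. Qed.
Lemma ctrK p q (A : 'M[C]_(p, q)) : ctr (ctr A) = A.
Proof. by apply/matrixP => i j; rewrite !mxE conjCK. Qed.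
Lemma ctr1 p : ctr (1%:M : 'M[C]_p) = 1%:M.
Proof. by rewrite /ctr map_mx1 trmx1. Qed.
Lemma ctr0 p q : ctr (0 : 'M[C]_(p, q)) = 0.
Proof. by rewrite /ctr map_mx0 trmx0. Qed.
Lemma ctr_block p1 p2 q1 q2 (a : 'M[C]_(p1, q1)) (b : 'M[C]_(p1, q2))
  (c : 'M[C]_(p2, q1)) (d : 'M[C]_(p2, q2)) :
  ctr (block_mx a b c d) = block_mx (ctr a) (ctr c) (ctr b) (ctr d).
Proof. by rewrite /ctr map_block_mx tr_block_mx. Qed.
Lemma ctr_diag p (d : 'rV[C]_p) : (forall i, d 0 i \is Num.real) -> ctr (diag_mx d) = diag_mx d.
Proof.
move=> dr; apply/matrixP => i j; rewrite !mxE eq_sym.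
by case: eqP => [->|]; rewrite ?mulr1n ?mulr0n ?conjC0 // conj_Creal.
Qed.

Lemma vnorm2_mul p q (A : 'M[C]_(p, q)) x :
  vnorm2 (A *m x) = (ctr x *m (ctr A *m A) *m x) 0 0.
Proof. by rewrite vnorm2E ctr_mul !mulmxA. Qed.

Lemma vnorm2_iso p q (W : 'M[C]_(p, q)) x : ctr W *m W = 1%:M -> vnorm2 (W *m x) = vnorm2 x.
Proof. by move=> WW; rewrite vnorm2_mul WW mulmx1 vnorm2E. Qed.

Lemma nl_iso p q (W : 'M[C]_(p, q)) : ctr W *m W = 1%:M -> norm_le W 1.
Proof. by move=> WW; split=> // x; rewrite vnorm2_iso // expr1n mul1r. Qed.

Lemma nl_1 p : norm_le (1%:M : 'M[C]_p) 1.
Proof. by apply: nl_iso; rewrite ctr1 mulmx1. Qed.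

Lemma nl_ctr p q (A : 'M[C]_(p, q)) a : norm_le A a -> norm_le (ctr A) a.
Proof.
case=> a0 H; split=> // x; set y := ctr A *m x.
have e1 : vnorm2 y = (ctr x *m (A *m y)) 0 0.
  by rewrite vnorm2E /y ctr_mul ctrK !mulmxA.
have h : vnorm2 y ^+ 2 <= vnorm2 x * (a ^+ 2 * vnorm2 y).
  have -> : vnorm2 y ^+ 2 = `|(ctr x *m (A *m y)) 0 0| ^+ 2.
    by rewrite -e1 ger0_norm ?vnorm2_ge0.
  by rewrite (le_trans (CS _ _)) // ler_wpM2l ?vnorm2_ge0 ?H.
have [y0|yn0] := eqVneq (vnorm2 y) 0; first by rewrite y0 mulr_ge0 ?exprn_ge0 ?vnorm2_ge0.
have yp : 0 < vnorm2 y by rewrite lt_def yn0 vnorm2_ge0.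
by rewrite -(ler_pM2r yp) -expr2 (le_trans h) // mulrCA mulrA.
Qed.

Lemma vnorm2_col p q (u : 'cV[C]_p) (v : 'cV[C]_q) : vnorm2 (col_mx u v) = vnorm2 u + vnorm2 v.
Proof. by rewrite /vnorm2 big_split_ord; congr (_ + _); apply: eq_bigr => i _; rewrite ?col_mxEu ?col_mxEd. Qed.

Lemma nl_usub p1 p2 q (A : 'M[C]_(p1 + p2, q)) a : norm_le A a -> norm_le (usubmx A) a.
Proof.
case=> a0 H; split=> // x; rewrite mul_usub_mx (le_trans _ (H x)) //.
by rewrite -{2}(vsubmxK (A *m x)) vnorm2_col lerDl vnorm2_ge0.
Qed.
Lemma nl_dsub p1 p2 q (A : 'M[C]_(p1 + p2, q)) a : norm_le A a -> norm_le (dsubmx A) a.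
Proof.
case=> a0 H; split=> // x; rewrite mul_dsub_mx (le_trans _ (H x)) //.
by rewrite -{2}(vsubmxK (A *m x)) vnorm2_col lerDr vnorm2_ge0.
Qed.
Lemma nl_lsub p q1 q2 (A : 'M[C]_(p, q1 + q2)) a : norm_le A a -> norm_le (lsubmx A) a.
Proof.
case=> a0 H; split=> // x; have := H (col_mx x 0).
rewrite -{1}(hsubmxK A) mul_row_col mulmx0 addr0 vnorm2_col.
suff -> : vnorm2 (0 : 'cV[C]_q2) = 0 by rewrite addr0.
by rewrite /vnorm2 big1 // => i _; rewrite mxE normr0 expr0n.
Qed.
Lemma nl_rsub p q1 q2 (A : 'M[C]_(p, q1 + q2)) a : norm_le A a -> norm_le (rsubmx A) a.
Proof.
case=> a0 H; split=> // x; have := H (col_mx 0 x).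
rewrite -{1}(hsubmxK A) mul_row_col mulmx0 add0r vnorm2_col.
suff -> : vnorm2 (0 : 'cV[C]_q1) = 0 by rewrite add0r.
by rewrite /vnorm2 big1 // => i _; rewrite mxE normr0 expr0n.
Qed.
Lemma nl_ul p1 p2 q1 q2 (A : 'M[C]_(p1 + p2, q1 + q2)) a : norm_le A a -> norm_le (ulsubmx A) a.
Proof. by move=> h; apply/nl_lsub/nl_usub. Qed.
Lemma nl_dr p1 p2 q1 q2 (A : 'M[C]_(p1 + p2, q1 + q2)) a : norm_le A a -> norm_le (drsubmx A) a.
Proof. by move=> h; apply/nl_rsub/nl_dsub. Qed.

Lemma nl_diag p (d : 'rV[C]_p) c : 0 <= c -> (forall i, `|d 0 i| <= c) -> norm_le (diag_mx d) c.
Proof.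
move=> c0 H; split=> // x; rewrite /vnorm2 mulr_sumr; apply: ler_sum => i _.
rewrite mul_diag_mx mxE normrM exprMn ler_wpM2r ?exprn_ge0 //.
by rewrite lerXn2r ?nnegrE ?H.
Qed.

Lemma vnorm2Z p (a : C) (x : 'cV[C]_p) : vnorm2 (a *: x) = `|a| ^+ 2 * vnorm2 x.
Proof. by rewrite /vnorm2 mulr_sumr; apply: eq_bigr => i _; rewrite mxE normrM exprMn. Qed.

Lemma diag_delta p (d : 'rV[C]_p) i : diag_mx d *m delta_mx i 0 = d 0 i *: (delta_mx i 0 : 'cV_p).
Proof.
apply/matrixP => j k; rewrite mul_diag_mx !mxE.
by case: (eqVneq i j) => [->|]; rewrite ?mulr0 ?mulr1 //= ?mulr0n ?mulr0.
Qed.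

Lemma vnorm2_delta p (i : 'I_p) : vnorm2 (delta_mx i 0 : 'cV[C]_p) = 1.
Proof.
rewrite /vnorm2 (bigD1 i) //= big1 ?addr0 => [|j ji]; first by rewrite mxE !eqxx normr1 expr1n.
by rewrite mxE (negbTE ji) normr0 expr0n.
Qed.

Lemma scal_key (y e : C) : 0 <= y -> 0 <= e -> y ^+ 2 <= 1 -> 1 <= (1 + e) * y ^+ 2 ->
  `|y - 1| <= e.
Proof.
move=> y0 e0 y1 y2.
have yle1 : y <= 1 by rewrite -ler_sqr ?nnegrE // expr1n.
rewrite ler0_norm ?subr_le0 // opprB lerBlDr.
rewrite (le_trans y2) // mulrDl mul1r addrC lerD //.
  by rewrite -[X in _ <= X]mulr1 ler_wpM2l.
by rewrite expr2 -[X in _ <= X]mul1r ler_wpM2r.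
Qed.

Lemma nl_ctr_iso p (P : 'M[C]_p) : P *m ctr P = 1%:M -> norm_le (ctr P) 1.
Proof. by move=> h; apply: nl_iso; rewrite ctrK. Qed.

Lemma key p (P : 'M[C]_p) (y : 'rV[C]_p) e :
  P *m ctr P = 1%:M -> ctr P *m P = 1%:M -> (forall i, 0 <= y 0 i) -> 0 <= e ->
  (forall x, vnorm2 (ctr P *m diag_mx y *m P *m x) <= vnorm2 x) ->
  (forall x, vnorm2 x <= (1 + e) * vnorm2 (ctr P *m diag_mx y *m P *m x)) ->
  norm_le (ctr P *m diag_mx y *m P - 1%:M) e.
Proof.
move=> PP PP' y0 e0 H1 H2.
have ev i : vnorm2 (ctr P *m diag_mx y *m P *m (ctr P *m delta_mx i 0)) = y 0 i ^+ 2.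
  rewrite -!mulmxA (mulmxA P) PP mul1mx diag_delta -scalemxAr vnorm2Z.
  by rewrite vnorm2_iso ?ctrK // vnorm2_delta mulr1 ger0_norm.
have ev1 i : vnorm2 (ctr P *m delta_mx i 0 : 'cV[C]_p) = 1.
  by rewrite vnorm2_iso ?ctrK // vnorm2_delta.
have -> : ctr P *m diag_mx y *m P - 1%:M = ctr P *m diag_mx (y - const_mx 1) *m P.
  by rewrite linearB /= diag_const_mx mulmxBr mulmxBl mulmx1 PP'.
suff: norm_le (ctr P *m diag_mx (y - const_mx 1) *m P) (1 * e * 1) by rewrite mul1r mulr1.
apply: nl_mul; last exact: nl_iso.
apply: nl_mul; first exact: nl_ctr_iso.
apply: nl_diag => // i; rewrite !mxE.
apply: scal_key => //; first by rewrite -(ev i) -(ev1 i) H1.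
by rewrite -(ev i); have := H2 (ctr P *m delta_mx i 0); rewrite ev1.
Qed.

Lemma spec p (Y : 'M[C]_p) : ctr Y = Y ->
  exists (P : 'M[C]_p) (y : 'rV[C]_p),
    [/\ P *m ctr P = 1%:M, ctr P *m P = 1%:M & Y = ctr P *m diag_mx y *m P].
Proof.
move=> hY.
have tc q r (A : 'M[C]_(q, r)) : (A^T ^ Num.conj)%sesqui = ctr A.
  by apply/matrixP => i j; rewrite !mxE.
have nY : Y \is normalmx by apply/normalmxP; rewrite tc hY.
have U := spectral_unitarymx Y.
have /unitarymxP := U; rewrite tc => PP.
exists (spectralmx Y), (spectral_diag Y); split => //; first exact: mulmx1C.
by rewrite {1}(orthomx_spectralP nY) invmx_unitary // tc.
Qed.
Lemma diagM p (a b : 'rV[C]_p) : diag_mx a *m diag_mx b = diag_mx (\row_i (a 0 i * b 0 i)).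
Proof.
apply/matrixP => i j; rewrite mul_diag_mx !mxE.
by case: (eqVneq i j) => [->|]; rewrite ?mulr1n ?mulr0n ?mulr0.
Qed.

Lemma conjdM p (P : 'M[C]_p) (a b : 'rV[C]_p) : P *m ctr P = 1%:M ->
  (ctr P *m diag_mx a *m P) *m (ctr P *m diag_mx b *m P) = ctr P *m diag_mx (\row_i (a 0 i * b 0 i)) *m P.
Proof.
move=> PP; rewrite -!mulmxA (mulmxA P) PP mul1mx.
by rewrite (mulmxA (diag_mx a)) diagM !mulmxA.
Qed.

Lemma eigv p (P : 'M[C]_p) (y : 'rV[C]_p) i : P *m ctr P = 1%:M ->
  let x := ctr P *m delta_mx i 0 in
  [/\ vnorm2 x = 1, ctr P *m diag_mx y *m P *m x = y 0 i *: x &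
      (ctr x *m (ctr P *m diag_mx y *m P) *m x) 0 0 = y 0 i].
Proof.
move=> PP x.
have e1 : vnorm2 x = 1 by rewrite vnorm2_iso ?ctrK // vnorm2_delta.
have e2 : ctr P *m diag_mx y *m P *m x = y 0 i *: x.
  by rewrite /x -!mulmxA (mulmxA P) PP mul1mx diag_delta -scalemxAr.
split=> //; rewrite -mulmxA e2 -scalemxAr mxE -vnorm2E e1 mulr1 //.
Qed.

Lemma vnorm2_eq0 p (x : 'cV[C]_p) : vnorm2 x = 0 -> x = 0.
Proof.
move=> h; apply/matrixP => i j; rewrite ord1 mxE; apply/eqP.
have := psumr_eq0P (fun i _ => exprn_ge0 2 (normr_ge0 (x i 0))) h (i := i) isT.
by move/eqP; rewrite sqrf_eq0 normr_eq0.
Qed.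

Lemma eig_nonneg p (P : 'M[C]_p) (y : 'rV[C]_p) : P *m ctr P = 1%:M ->
  (forall x : 'cV[C]_p, x != 0 -> 0 < (ctr x *m (ctr P *m diag_mx y *m P) *m x) 0 0) ->
  forall i, 0 < y 0 i.
Proof.
move=> PP H i; have [e1 _ e3] := eigv y i PP; rewrite -e3; apply: H.
by apply/eqP => h; move: e1; rewrite h; move/eqP; rewrite vnorm2E mulmx0 mxE eq_sym oner_eq0.
Qed.

Lemma psd_sqrt p (M : 'M[C]_p) : ctr M = M ->
  (forall x : 'cV[C]_p, 0 <= (ctr x *m M *m x) 0 0) ->
  exists (P : 'M[C]_p) (y : 'rV[C]_p),
    [/\ P *m ctr P = 1%:M, ctr P *m P = 1%:M, M = ctr P *m diag_mx y *m P &
     forall i, 0 <= y 0 i].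
Proof.
move=> hM H; have [P [y [PP PP' eM]]] := spec hM.
exists P, y; split => // i; have [_ _ e3] := eigv y i PP.
by rewrite -e3 -eM H.
Qed.

End Infra.

Lemma sum_id (C : numClosedFieldType) p q1 q2 (A : 'M[C]_(q1, p)) (B : 'M[C]_(q2, p)) x :
  ctr A *m A + ctr B *m B = 1%:M -> vnorm2 x = vnorm2 (A *m x) + vnorm2 (B *m x).
Proof.
move=> h; rewrite !vnorm2_mul vnorm2E.
have -> : ctr x *m x = ctr x *m (ctr A *m A + ctr B *m B) *m x by rewrite h mulmx1.
by rewrite mulmxDr mulmxDl mxE.
Qed.

Lemma zid (V : zmodType) (a b c d : V) : a - b + (b - c) + d = a + d - c.
Proof. by rewrite addrA subrK addrAC. Qed.

Lemma dl_ctr (C : numClosedFieldType) p1 p2 q1 q2 (M : 'M[C]_(p1 + p2, q1 + q2)) : dlsubmx (ctr M) = ctr (ursubmx M).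
Proof. by rewrite -{1}(submxK M) ctr_block block_mxKdl. Qed.

Lemma diag_ur (C : numClosedFieldType) p1 p2 (d : 'rV[C]_(p1 + p2)) : ursubmx (diag_mx d) = 0.
Proof. by apply/matrixP => i j; rewrite !mxE eq_lrshift mulr0n. Qed.
Lemma diag_dl (C : numClosedFieldType) p1 p2 (d : 'rV[C]_(p1 + p2)) : dlsubmx (diag_mx d) = 0.
Proof. by apply/matrixP => i j; rewrite !mxE eq_sym eq_lrshift mulr0n. Qed.
Unset Implicit Arguments.

Theorem lemma3 (C : numClosedFieldType) (m k r : nat)
  (A B Cf X Lam : 'M[C]_(m + r))
  (G : 'M[C]_(r, m)) (V : 'M[C]_(m + r, k)) (U : 'M[C]_(m + k))
  (Linv : 'M[C]_m) (eps : C) :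
  (k < r)%N ->
  herm_mx A -> posdef_mx B -> B = ctr Cf *m Cf -> Cf \in unitmx ->
  ctr X *m B *m X = 1%:M -> A *m X = B *m X *m Lam -> real_diag Lam ->
  is_specnorm G eps -> eps <= 2^-1 ->
  unitary_mx U ->
  let Xm := lsubmx X in
  let Xm' := rsubmx X in
  let W := Xm + Xm' *m G in
  is_pinvsqrt (ctr W *m B *m W) Linv ->
  let Q := row_mx (W *m Linv) V *m U in
  ctr Q *m B *m Q = 1%:M ->
  (* (1) *)
  norm_le (Linv - 1%:M) (eps ^+ 2) /\
  exists (S : 'M[C]_(m, k)) (H : 'M[C]_(r, k)) (R : 'M[C]_k),
    V = Xm *m S + Xm' *m H *m R /\ norm_le S eps /\
    ctr H *m H = 1%:M /\ norm_le (R - 1%:M) (eps ^+ 2) /\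
  (* (2) *)
    (exists Theta : 'M[C]_(m + r, m + k),
       ctr X *m B *m Q = (block_mx 1%:M 0 0 H + Theta) *m U /\
       norm_le (ulsubmx Theta) (eps ^+ 2) /\ norm_le (drsubmx Theta) (eps ^+ 2) /\
       norm_le (ursubmx Theta) ((1 + eps ^+ 2) * eps) /\
       norm_le (dlsubmx Theta) ((1 + eps ^+ 2) * eps)) /\
  (* (3) *)
    (forall (D : 'M[C]_(m + r)) (nD : C), real_diag D -> is_specnorm D nD ->
       exists Delta : 'M[C]_(m + k),
         dlsubmx Delta = ctr (ursubmx Delta) /\
         (ctr Q *m B *m X) *m D *m (ctr X *m B *m Q) =
           ctr U *m (block_mx (ulsubmx D) 0 0 (ctr H *m drsubmx D *m H) + Delta) *m U /\
         norm_le (ulsubmx Delta) (4 * nD * eps ^+ 2) /\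
         norm_le (drsubmx Delta) (4 * nD * eps ^+ 2) /\
         norm_le (ursubmx Delta) (4 * nD * eps)).
Proof.
move=> _ _ [hBh _] _ _ hXBX _ _ [nG _] _ hU Xm Xm' W [[hLh hLpos] hLinv] Q hQ.
have e0 : 0 <= eps := nl_ge0 nG.
have hXi : X *m (ctr X *m B) = 1%:M by apply: mulmx1C.
have hUU : U *m ctr U = 1%:M by apply: mulmx1C.
pose SS := ctr X *m B *m V; pose S := usubmx SS; pose T := dsubmx SS.
have hV : V = X *m col_mx S T by rewrite vsubmxK /SS mulmxA hXi mul1mx.
have hW : W = X *m col_mx 1%:M G.
  by rewrite -{1}(hsubmxK X) mul_row_col mulmx1.
pose Z := block_mx Linv S (G *m Linv) T.
have hQZ : Q = X *m Z *m U.
  by rewrite /Q /Z hW {1}hV block_mxEh mul_mx_row -(mulmxA X) mul_col_mx mul1mx.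
have XBQ : ctr X *m B *m Q = Z *m U.
  by rewrite hQZ !mulmxA hXBX mul1mx.
have ZZ : ctr Z *m Z = 1%:M.
  have h1 : ctr Q *m B *m Q = ctr U *m (ctr Z *m Z) *m U.
    rewrite hQZ !ctr_mul -!mulmxA (mulmxA (ctr X)) (mulmxA (ctr X *m B)) hXBX mul1mx.
    by rewrite !mulmxA.
  have := congr1 (fun M => U *m M *m ctr U) h1; rewrite hQ mulmx1 hUU !mulmxA hUU mul1mx.
  by rewrite -!mulmxA hUU mulmx1 => <-.
move: (ZZ); rewrite /Z ctr_block mulmx_block (scalar_mx_block m k) => /eq_block_mx [Z1 Z2 _ Z4].
have Lu : Linv \in unitmx.
  by move: hLinv; rewrite -mulmxA => /mulmx1_unit [].
have hS : S = - (ctr G *m T).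
  move: Z2; rewrite ctr_mul hLh -mulmxA -mulmxDr => /(congr1 (mulmx (invmx Linv))).
  by rewrite mulKmx // mulmx0 => /eqP; rewrite addr_eq0 => /eqP.
have nGc : norm_le (ctr G) eps := nl_ctr nG.
have Lid x : vnorm2 x = vnorm2 (Linv *m x) + vnorm2 (G *m (Linv *m x)).
  by rewrite mulmxA; apply: sum_id.
have Tid x : vnorm2 x = vnorm2 (T *m x) + vnorm2 (ctr G *m (T *m x)).
  rewrite (sum_id x Z4) addrC hS mulNmx vnorm2N mulmxA //.
have nL1 : norm_le Linv 1.
  by split=> // x; rewrite expr1n mul1r [X in _ <= X]Lid lerDl vnorm2_ge0.
have nT1 : norm_le T 1.
  by split=> // x; rewrite expr1n mul1r [X in _ <= X]Tid lerDl vnorm2_ge0.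
have Llow x : vnorm2 x <= (1 + eps ^+ 2) * vnorm2 (Linv *m x).
  by rewrite Lid mulrDl mul1r lerD2l; case: nG => _ ->.
have Tlow x : vnorm2 x <= (1 + eps ^+ 2) * vnorm2 (T *m x).
  by rewrite Tid mulrDl mul1r lerD2l; case: nGc => _ ->.
have nS : norm_le S eps.
  by rewrite hS -[eps]mulr1; apply/nl_opp/nl_mul.
have nGL : norm_le (G *m Linv) eps by rewrite -[eps]mulr1; apply: nl_mul.
have nL : norm_le (Linv - 1%:M) (eps ^+ 2).
  have [P [y [PP PP' eL]]] := spec hLh.
  have ypos : forall i, 0 <= y 0 i.
    move=> i; apply: ltW; apply: (eig_nonneg PP); rewrite -eL; exact: hLpos.
  rewrite eL; apply: key => // [|x|x]; first exact: exprn_ge0.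
    by rewrite -eL; case: nL1 => _ h; rewrite (le_trans (h x)) // expr1n mul1r.
  by rewrite -eL.
(* polar factor *)
have hMh : ctr (ctr T *m T) = ctr T *m T by rewrite ctr_mul ctrK.
have [P [y [PP PP' eM ypos]]] : exists (P : 'M[C]_k) (y : 'rV[C]_k),
    [/\ P *m ctr P = 1%:M, ctr P *m P = 1%:M, ctr T *m T = ctr P *m diag_mx y *m P &
     forall i, 0 <= y 0 i].
  by apply: psd_sqrt => // x; rewrite -mulmxA mulmxA -vnorm2_mul vnorm2_ge0.
pose s := \row_i sqrtC (y 0 i).
have s0 i : 0 <= s 0 i by rewrite mxE sqrtC_ge0.
pose R := ctr P *m diag_mx s *m P.
have RR : R *m R = ctr T *m T.
  rewrite /R conjdM // eM; congr (_ *m diag_mx _ *m _); apply/rowP => i.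
  by rewrite !mxE -expr2 sqrtCK.
have Rh : ctr R = R.
  by rewrite /R !ctr_mul ctrK ctr_diag ?mulmxA // => i; rewrite ger0_real.
have vR x : vnorm2 (R *m x) = vnorm2 (T *m x).
  by rewrite !vnorm2_mul Rh RR.
have sn0 i : s 0 i != 0.
  have [e1 e2 _] := eigv s i PP.
  apply/eqP => h; have := Tlow (ctr P *m delta_mx i 0).
  rewrite -vR /R e2 e1 h scale0r.
  have -> : vnorm2 (0 : 'cV[C]_k) = 0 by rewrite vnorm2E mulmx0 mxE.
  by rewrite mulr0 ler10.
pose Rinv := ctr P *m diag_mx (\row_i (s 0 i)^-1) *m P.
have RRi : R *m Rinv = 1%:M.
  rewrite /R /Rinv conjdM //.
  have -> : \row_i (s 0 i * (\row_i (s 0 i)^-1) 0 i) = const_mx 1.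
    by apply/rowP => i; have := sn0 i; rewrite !mxE => h; rewrite divff.
  by rewrite diag_const_mx mulmx1.
have nR : norm_le (R - 1%:M) (eps ^+ 2).
  rewrite /R; apply: key => // [|x|x]; first exact: exprn_ge0.
    by rewrite -/R vR; case: nT1 => _ h; rewrite (le_trans (h x)) // expr1n mul1r.
  by rewrite -/R vR.
clearbody R Rinv.
have RiR : Rinv *m R = 1%:M by apply: mulmx1C.
pose H := T *m Rinv.
have HR : H *m R = T by rewrite /H -mulmxA RiR mulmx1.
have HH : ctr H *m H = 1%:M.
  rewrite /H ctr_mul -mulmxA (mulmxA (ctr T)) -RR -{1}Rh.
  by rewrite !mulmxA -ctr_mul RRi ctr1 mul1mx RRi.
have nR1 : norm_le R 1.
  by split=> // x; rewrite vR expr1n mul1r; case: nT1 => _ h; rewrite (le_trans (h x)) // expr1n mul1r.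
split=> //; exists S, H, R; split.
  by rewrite hV -{1}(hsubmxK X) mul_row_col -mulmxA HR.
do 3!split=> //.
clearbody H.
have ee2 : 0 <= eps ^+ 2 := exprn_ge0 2 e0.
have e2 : eps <= (1 + eps ^+ 2) * eps by rewrite mulrDl mul1r lerDl mulr_ge0.
split.
  exists (Z - block_mx 1%:M 0 0 H).
  split; first by rewrite XBQ addrC subrK.
  have -> : Z - block_mx 1%:M 0 0 H = block_mx (Linv - 1%:M) S (G *m Linv) (T - H).
    by rewrite /Z opp_block_mx add_block_mx !oppr0 !addr0.
  rewrite block_mxKul block_mxKdr block_mxKur block_mxKdl.
  split=> //; split; last by split; apply: nl_le e2.
  rewrite -HR -{2}[H]mulmx1 -mulmxBr -[eps ^+ 2]mul1r.
  by apply: nl_mul => //; exact: nl_iso.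
move=> D nD [d [hDd dr]] [nDl _].
have nD0 := nl_ge0 nDl.
have hDh : ctr D = D by rewrite hDd ctr_diag.
have ur0 : ursubmx D = 0 by rewrite hDd diag_ur.
have dl0 : dlsubmx D = 0 by rewrite hDd diag_dl.
have nDm := nl_ul nDl; have nDm' := nl_dr nDl.
have eD : D = block_mx (ulsubmx D) 0 0 (drsubmx D) by rewrite -ur0 -dl0 submxK.
have [hDm hDm'] : ctr (ulsubmx D) = ulsubmx D /\ ctr (drsubmx D) = drsubmx D.
  by move: hDh; rewrite {1}eD ctr_block !ctr0 {3}eD => /eq_block_mx [-> _ _ ->].
move: nDm nDm' hDm hDm' eD; set Dm := ulsubmx D; set Dm' := drsubmx D.
move=> nDm nDm' hDm hDm' eD.
pose K := ctr H *m Dm' *m H.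
exists (ctr Z *m D *m Z - block_mx Dm 0 0 K).
have cQ : ctr Q *m B *m X = ctr U *m ctr Z.
  have -> : ctr Q *m B *m X = ctr (ctr X *m B *m Q) by rewrite !ctr_mul ctrK hBh mulmxA.
  by rewrite XBQ ctr_mul.
have hDel : ctr (ctr Z *m D *m Z - block_mx Dm 0 0 K) = ctr Z *m D *m Z - block_mx Dm 0 0 K.
  by rewrite ctrB !ctr_mul ctrK hDh ctr_block !ctr0 /K !ctr_mul ctrK hDm hDm' !mulmxA.
split; first by rewrite -dl_ctr hDel.
split; first by rewrite cQ XBQ addrC subrK !mulmxA.
rewrite /Z {1 2 3}eD ctr_block !mulmx_block ?mulmx0 ?mul0mx ?addr0 ?add0r.
rewrite opp_block_mx add_block_mx ?oppr0 ?addr0.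
rewrite block_mxKul block_mxKdr block_mxKur hLh.
have nK : norm_le K (1 * nD * 1).
  exact: nl_mul (nl_mul (nl_ctr (nl_iso HH)) nDm') (nl_iso HH).
split.
  have -> : Linv *m Dm *m Linv + ctr (G *m Linv) *m Dm' *m (G *m Linv) - Dm =
    (Linv - 1%:M) *m Dm *m Linv + Dm *m (Linv - 1%:M) + ctr (G *m Linv) *m Dm' *m (G *m Linv).
    by rewrite !mulmxBl !mulmxBr !mul1mx mulmx1 zid; reflexivity.
  apply: nl_le (nl_add (nl_add (nl_mul (nl_mul nL nDm) nL1) (nl_mul nDm nL))
     (nl_mul (nl_mul (nl_ctr nGL) nDm') nGL)) _.
  have -> : eps ^+ 2 * nD * 1 + nD * eps ^+ 2 + eps * nD * eps = 3%:R * (nD * eps ^+ 2) by ring.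
  by rewrite -mulrA ler_wpM2r ?mulr_ge0 // ler_nat.
split.
  rewrite -HR ctr_mul Rh.
  have -> : R *m ctr H *m Dm' *m (H *m R) = R *m K *m R by rewrite /K !mulmxA.
  have -> : ctr S *m Dm *m S + R *m K *m R - K =
    ctr S *m Dm *m S + ((R - 1%:M) *m K *m R + K *m (R - 1%:M)).
    by rewrite !mulmxBl !mulmxBr !mul1mx mulmx1 (addrA (R *m K *m R - K *m R)) subrK addrA.
  apply: nl_le (nl_add (nl_mul (nl_mul (nl_ctr nS) nDm) nS)
     (nl_add (nl_mul (nl_mul nR nK) nR1) (nl_mul nK nR))) _.
  have -> : eps * nD * eps + (eps ^+ 2 * (1 * nD * 1) * 1 + 1 * nD * 1 * eps ^+ 2)
    = 3%:R * (nD * eps ^+ 2) by ring.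
  by rewrite -mulrA ler_wpM2r ?mulr_ge0 // ler_nat.
apply: nl_le (nl_add (nl_mul (nl_mul nL1 nDm) nS)
   (nl_mul (nl_mul (nl_ctr nGL) nDm') nT1)) _.
have -> : 1 * nD * eps + eps * nD * 1 = 2%:R * (nD * eps) by ring.
by rewrite -mulrA ler_wpM2r ?mulr_ge0 // ler_nat.
Qed.
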